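(* Let $(X,S)$ be an $S$-metric space, $r\ge0$, $\{x_n\}$ a sequence in $X$, and $\{x_{n_p}\}_{p\in\mathbb N}$ a subsequence (with $n_1<n_2<\cdots$) such that $\delta(\{n_1,n_2,\dots\})=1$. Then $st\text{-}LIM^r x_n\subseteq st\text{-}LIM^r x_{n_p}$.
   Context: An $S$-metric on a nonempty set $X$ is a function $S:X^3\to[0,\infty)$ such that for all $x,y,z,a\in X$: $S(x,y,z)=0$ if and only if $x=y=z$, and $S(x,y,z)\le S(x,x,a)+S(y,y,a)+S(z,z,a)$. For $B\subset\mathbb N$ the natural density is $\delta(B)=\lim_{n\to\infty}\frac{|\{k\in B:k\le n\}|}{n}$ when the limit exists. For $r\ge0$, a sequence $\{y_n\}$ is $r$-statistically convergent to $x$ if for every $\varepsilon>0$, $\delta(\{n\in\mathbb N: S(y_n,y_n,x)\ge r+\varepsilon\})=0$; $st\text{-}LIM^r y_n$ denotes the set of all such $x\in X$. *)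

(* Defs.v *)
From Stdlib Require Import Reals Lra ClassicalDescription.
Open Scope R_scope.

Definition is_Smetric {X : Type} (S : X -> X -> X -> R) : Prop :=
  (forall x y z, 0 <= S x y z) /\
  (forall x y z, S x y z = 0 <-> (x = y /\ y = z)) /\
  (forall x y z a, S x y z <= S x x a + S y y a + S z z a).

Fixpoint count_upto (P : nat -> Prop) (n : nat) : nat :=
  match n with
  | O => O
  | S m => (count_upto P m +
            (if excluded_middle_informative (P m) then 1 else 0))%nat
  end.

Definition has_density (P : nat -> Prop) (d : R) : Prop :=
  Un_cv (fun n => INR (count_upto P n) / INR n) d.

(* y is r-statistically convergent to x, i.e. x ∈ st-LIM^r y *)
Definition st_LIM {X : Type} (S : X -> X -> X -> R) (r : R) (y : nat -> X) (x : X) : Prop :=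
  forall eps : R, 0 < eps -> has_density (fun n => r + eps <= S (y n) (y n) x) 0.

(* Main.v *)
Require Import Defs.
From Stdlib Require Import Reals.
From Stdlib Require Import Lra Lia ClassicalDescription.
Open Scope R_scope.

Lemma cnt_mono P n k : (n <= k)%nat -> (count_upto P n <= count_upto P k)%nat.
Proof.
  induction 1; auto. simpl. destruct (excluded_middle_informative (P m)); lia.
Qed.

Lemma cnt_const P k n : (forall j, (k <= j < k + n)%nat -> ~ P j) ->
  count_upto P (k + n) = count_upto P k.
Proof.
  induction n; intros H. now rewrite Nat.add_0_r.
  rewrite Nat.add_succ_r. simpl.
  destruct (excluded_middle_informative (P (k+n)%nat)) as [h|h].
  - exfalso. apply (H (k+n)%nat); auto; lia.
  - rewrite IHn; [lia|]. intros j hj. apply H. lia.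
Qed.

Section S.
Variable ns : nat -> nat.
Hypothesis hinc : forall p q : nat, (p < q)%nat -> (ns p < ns q)%nat.

Lemma ns_mono p q : (p <= q)%nat -> (ns p <= ns q)%nat.
Proof. intros h. destruct (Nat.eq_dec p q). subst; lia. apply Nat.lt_le_incl, hinc; lia. Qed.

Lemma ns_ge p : (p <= ns p)%nat.
Proof. induction p. lia. specialize (hinc p (S p)). lia. Qed.

Lemma cnt_sub (P Q : nat -> Prop) : (forall p, P p -> Q (ns p)) ->
  forall m, (count_upto P m <= count_upto Q (ns m))%nat.
Proof.
  intros HPQ m. induction m. simpl; lia.
  assert (h1 := cnt_mono Q (S (ns m)) (ns (S m)) (hinc m (S m) (Nat.lt_succ_diag_r m))).
  simpl in *. destruct (excluded_middle_informative (P m)) as [h|h];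
  destruct (excluded_middle_informative (Q (ns m))) as [h'|h']; try lia.
  exfalso; auto.
Qed.

Lemma cntA m : (count_upto (fun k => exists p, k = ns p) (ns m) <= m)%nat.
Proof.
  induction m.
  - replace (ns 0) with (0 + ns 0)%nat by lia. rewrite cnt_const. simpl; lia.
    intros j hj [p hp]. subst. assert (h := ns_mono 0 p). lia.
  - replace (ns (S m)) with (S (ns m) + (ns (S m) - S (ns m)))%nat
      by (specialize (hinc m (S m)); lia).
    rewrite cnt_const. simpl. destruct excluded_middle_informative; lia.
    intros j hj [p hp]. subst.
    destruct (Nat.le_gt_cases p m) as [h|h].
    + assert (h2 := ns_mono p m h). lia.
    + assert (h2 := ns_mono (S m) p h). lia.
Qed.
End S.

Theorem theorem4p7 (X : Type) (S : X -> X -> X -> R) (hS : is_Smetric S)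
  (r : R) (hr : 0 <= r) (x : nat -> X) (ns : nat -> nat)
  (hinc : forall p q : nat, (p < q)%nat -> (ns p < ns q)%nat)
  (hdens : has_density (fun k => exists p : nat, k = ns p) 1) :
  forall a : X, st_LIM S r x a -> st_LIM S r (fun p => x (ns p)) a.
Proof.
  intros a ha eps heps. specialize (ha eps heps).
  unfold has_density, Un_cv, R_dist in *. intros e he.
  destruct (ha (e/2)) as [N1 H1]; [lra|].
  destruct (hdens (1/2)) as [N2 H2]; [lra|].
  exists (max (max N1 N2) 1). intros m hm.
  assert (hc := cnt_sub ns hinc (fun p => r + eps <= S (x (ns p)) (x (ns p)) a)
     (fun n => r + eps <= S (x n) (x n) a) (fun p h => h) m).
  assert (hca := cntA ns hinc m).
  assert (hge := ns_ge ns hinc m).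
  specialize (H1 (ns m) ltac:(lia)). specialize (H2 (ns m) ltac:(lia)).
  set (c := count_upto _ m) in *.
  set (cb := count_upto _ (ns m)) in hc, H1.
  set (ca := count_upto _ (ns m)) in hca, H2.
  apply le_INR in hc. apply le_INR in hca. apply le_INR in hge.
  assert (hm1 : 1 <= INR m) by (apply (le_INR 1); lia).
  assert (hN : 0 < INR (ns m)) by lra.
  assert (c0 : 0 <= INR c) by apply pos_INR.
  apply Rabs_def2 in H1. apply Rabs_def2 in H2. destruct H1 as [H1 _]. destruct H2 as [_ H2].
  rewrite Rminus_0_r in H1.
  assert (ecb : INR cb = INR cb / INR (ns m) * INR (ns m)) by (field; lra).
  assert (eca : INR ca = INR ca / INR (ns m) * INR (ns m)) by (field; lra).
  assert (i1 : INR cb < e/2 * INR (ns m)) by nra.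
  assert (i2 : INR ca > 1/2 * INR (ns m)) by nra.
  rewrite Rminus_0_r. rewrite Rabs_right.
  - apply (Rmult_lt_reg_r (INR m)); [lra|].
    replace (INR c / INR m * INR m) with (INR c) by (field; lra). nra.
  - apply Rle_ge. unfold Rdiv; apply Rmult_le_pos; [lra| left; apply Rinv_0_lt_compat; lra].
Qed.
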